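(* Let $n\ge0$ be an integer, $\kappa\ge0$, and suppose each arc travel time function has the form $t_a(\mathbf v)=\sum_{m=0}^nb_{am}\big(\sum_{e\in\mathcal A}d_{aem}v_e\big)^m$ with constants $b_{am}\ge0$, $d_{aem}\ge0$. If $\mathbf f^0\in\mathbf F$ is a PRUE flow, then $(1+\kappa)\mathbf f^0$ is a $\sigma$-MSatUE flow in $\mathbf F_{1+\kappa}$ (i.e. for the demands $(1+\kappa)Q_w$), where $\sigma=(1+\kappa)^n-1$. In particular, when $n=1$, $\sigma=\kappa$.
   Context: Let $G=(\mathcal N,\mathcal A)$ be a finite directed graph and $\mathcal W$ a finite set of OD pairs; each $w$ has demand $Q_w>0$ and a finite set $\mathcal P_w$ of paths from its origin to its destination; $\mathcal P=\bigcup_w\mathcal P_w$; $\delta^p_a=1$ if arc $a$ lies on path $p$, else $0$. $\mathbf F=\{\mathbf f\ge0:\sum_{p\in\mathcal P_w}f_p=Q_w\ \forall w\}$, $\mathbf F_{1+\kappa}=\{(1+\kappa)\mathbf f:\mathbf f\in\mathbf F\}$. Arc flow $v_a=\sum_p\delta^p_af_p$; path travel time $c_p(\mathbf f)=\sum_a\delta^p_at_a(\mathbf v)$. A feasible flow (in the relevant set) is a PRUE if for all $w$, $p\in\mathcal P_w$: $f_p>0\implies c_p(\mathbf f)=\min_{p'\in\mathcal P_w}c_{p'}(\mathbf f)$; for $\sigma\ge0$ it is a $\sigma$-MSatUE if $f_p>0\implies c_p(\mathbf f)\le(1+\sigma)\min_{p'\in\mathcal P_w}c_{p'}(\mathbf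 f)$. *)

(* Defs.v *)
From mathcomp Require Import all_boot all_order all_algebra.
Set Implicit Arguments. Unset Strict Implicit. Unset Printing Implicit Defensive.
Import Order.TTheory GRing.Theory Num.Theory.
Local Open Scope ring_scope.

(* A network: arcs [A], OD pairs [W], paths [P] (a finite type).  Each path
   p belongs to exactly one OD pair [od p], so P_w = [pred p | od p == w].
   [delta p a] is the path–arc incidence. *)

Section Network.
Variables (R : realFieldType) (A W P : finType).
Variable od : P -> W.
Variable delta : P -> A -> bool.

Definition arc_flow (f : P -> R) (a : A) : R :=
  \sum_(p : P | delta p a) f p.

Definition path_cost (t : A -> (A -> R) -> R) (f : P -> R) (p : P) : R :=
  \sum_(a : A | delta p a) t a (arc_flow f).

(* feasible set F_c = { f >= 0 : sum_{p in P_w} f_p = c * Q_w } ;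
   F = F_1, F_{1+kappa} = scaled demands *)
Definition feasible (Q : W -> R) (c : R) (f : P -> R) : Prop :=
  (forall p, 0 <= f p) /\ (forall w, \sum_(p : P | od p == w) f p = c * Q w).

Definition PRUE (t : A -> (A -> R) -> R) (f : P -> R) : Prop :=
  forall p, 0 < f p ->
    forall p', od p' = od p -> path_cost t f p <= path_cost t f p'.

Definition MSatUE (sigma : R) (t : A -> (A -> R) -> R) (f : P -> R) : Prop :=
  forall p, 0 < f p ->
    forall p', od p' = od p -> path_cost t f p <= (1 + sigma) * path_cost t f p'.

End Network.

Definition poly_time (R : realFieldType) (A : finType) (n : nat)
  (b : A -> nat -> R) (d : A -> A -> nat -> R) : A -> (A -> R) -> R :=
  fun a v => \sum_(0 <= m < n.+1) b a m * (\sum_(e : A) d a e m * v e) ^+ m.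

(* Main.v *)
Require Import Defs.
From mathcomp Require Import all_boot all_order all_algebra.
Import Order.TTheory GRing.Theory Num.Theory.
Local Open Scope ring_scope.

Lemma time_bounds (R : realFieldType) (A : finType) (n : nat)
  (b : A -> nat -> R) (d : A -> A -> nat -> R) (v w : A -> R) (c : R) (a : A) :
  1 <= c -> (forall e, w e = c * v e) -> (forall a m, 0 <= b a m) -> (forall a e m, 0 <= d a e m) ->
  (forall e, 0 <= v e) ->
  poly_time n b d a v <= poly_time n b d a w /\
  poly_time n b d a w <= c ^+ n * poly_time n b d a v.
Proof.
move=> c1 hw hb hd hv.
have c0 : 0 <= c by apply: le_trans c1.
rewrite /poly_time.
have E : forall m, \sum_(e : A) d a e m * w e = c * \sum_(e : A) d a e m * v e.
  move=> m; rewrite mulr_sumr; apply: eq_bigr => e _; by rewrite hw mulrCA.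
have X0 : forall m, 0 <= \sum_(e : A) d a e m * v e.
  move=> m; apply: sumr_ge0 => e _; exact: mulr_ge0.
split.
  apply: ler_sum => m _; rewrite E exprMn mulrA.
  apply: ler_wpM2r; first exact: exprn_ge0.
  rewrite -{1}(mulr1 (b a m)); apply: ler_wpM2l => //; exact: exprn_ege1.
rewrite mulr_sumr !big_mkord; apply: ler_sum => m _; have hm := ltn_ord m.
rewrite E exprMn mulrCA.
apply: ler_wpM2r; first by apply: mulr_ge0 => //; exact: exprn_ge0.
exact: ler_weXn2l.
Qed.

Theorem lemma8 (R : realFieldType) (A W P : finType) (od : P -> W)
  (delta : P -> A -> bool) (Q : W -> R) (n : nat) (kappa : R)
  (b : A -> nat -> R) (d : A -> A -> nat -> R) (f0 : P -> R) :
  (forall w, 0 < Q w) ->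
  0 <= kappa ->
  (forall a m, 0 <= b a m) ->
  (forall a e m, 0 <= d a e m) ->
  feasible od Q 1 f0 ->
  PRUE od delta (poly_time n b d) f0 ->
  feasible od Q (1 + kappa) (fun p => (1 + kappa) * f0 p) /\
  MSatUE od delta ((1 + kappa) ^+ n - 1) (poly_time n b d)
    (fun p => (1 + kappa) * f0 p).
Proof.
move=> hQ hk hb hd [hf0 hsum] hprue.
set c := 1 + kappa.
have c1 : 1 <= c by rewrite /c lerDl.
have c0 : 0 < c by apply: lt_le_trans c1.
have AF : forall a, arc_flow delta (fun p => c * f0 p) a = c * arc_flow delta f0 a.
  by move=> a; rewrite /arc_flow mulr_sumr.
have v0 : forall e, 0 <= arc_flow delta f0 e.
  move=> e; apply: sumr_ge0 => p _; exact: hf0.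
split.
  split; first by move=> p; apply: mulr_ge0 => //; apply: ltW.
  by move=> w; rewrite -mulr_sumr hsum mul1r.
move=> p hp p' hod.
have hp0 : 0 < f0 p by rewrite pmulr_rgt0 in hp.
rewrite addrC subrK.
apply: (le_trans (y := c ^+ n * path_cost delta (poly_time n b d) f0 p)).
  rewrite /path_cost mulr_sumr; apply: ler_sum => a _.
  by case: (@time_bounds R A n b d (arc_flow delta f0) _ c a c1 AF hb hd v0).
apply: (le_trans (y := c ^+ n * path_cost delta (poly_time n b d) f0 p')).
  apply: ler_wpM2l; first exact: exprn_ge0 (ltW c0).
  exact: hprue.
apply: ler_wpM2l; first exact: exprn_ge0 (ltW c0).
rewrite /path_cost; apply: ler_sum => a _.
by case: (@time_bounds R A n b d (arc_flow delta f0) _ c a c1 AF hb hd v0).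
Qed.
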